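(* Let $R\in(0,\infty)\setminus\{1\}$, $b_1>0$, $b_2>1$, $b_3>0$, and let $m,\ell,F$ be as in the context. For $q\in(0,1]$ and $(1-R)m(q)<(1-R)n<(1-R)\ell(q)$, and for $q>1$ and $(1-R)m(q)<(1-R)n$, we have $\frac{\partial}{\partial n}F(q,n)\le0$.
   Context: Define $m(q)=\frac{R(1-R)}{b_1}q^2-\frac{b_3(1-R)}{b_1}q+1$, $\ell(q)=m(q)+\frac{1-R}{b_1}q(1-q)+\frac{(b_2-1)R(1-R)}{b_1}\frac{q}{(1-R)q+R}$, $\varphi(q,n)=b_1(n-1)+(1-R)(b_3-2R)q+(2-b_2)R(1-R)$, $E(q)^2=4R^2(1-R)^2(b_2-1)(1-q)^2$, $O(q,n)=\frac{(1-R)n}{R(1-q)}-\frac{2(1-R)^2qn/R}{2(1-R)(1-q)[(1-R)q+R]-\varphi(q,n)-\mathrm{sgn}(1-R)\sqrt{\varphi(q,n)^2+E(q)^2}}$. Let $\mathcal{S}=\{q=1\}\cup\{q=\frac{R}{R-1}\}\cup\{n=0\}\cup\{q<1,(1-R)n\ge(1-R)\ell(q)\}$. On $(0,\infty)\times[0,\infty)\setminus\mathcal{S}$ define $F(q,n)=O(q,n)/n$, extended to $(0,\infty)\times[0,\infty)$ where possible by taking limits (in particular at $q=1$, at $q=R/(R-1)$ when $R>1$, and at $n=\ell(q)$ for $q>1$). *)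

(* Defs.v *)
From Stdlib Require Import Reals Lra ClassicalEpsilon.
From Coquelicot Require Import Coquelicot.
Open Scope R_scope.

(* The paper's parameter R is called Rp here (R is the type of reals). *)

Definition sgn (x : R) : R := if Rlt_dec 0 x then 1 else if Rlt_dec x 0 then -1 else 0.

Definition m_fun (Rp b1 b3 q : R) : R :=
  Rp * (1 - Rp) / b1 * q ^ 2 - b3 * (1 - Rp) / b1 * q + 1.

Definition l_fun (Rp b1 b2 b3 q : R) : R :=
  m_fun Rp b1 b3 q + (1 - Rp) / b1 * q * (1 - q)
  + (b2 - 1) * Rp * (1 - Rp) / b1 * (q / ((1 - Rp) * q + Rp)).

Definition phi_fun (Rp b1 b2 b3 q n : R) : R :=
  b1 * (n - 1) + (1 - Rp) * (b3 - 2 * Rp) * q + (2 - b2) * Rp * (1 - Rp).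

Definition E2_fun (Rp b2 q : R) : R :=
  4 * Rp ^ 2 * (1 - Rp) ^ 2 * (b2 - 1) * (1 - q) ^ 2.

Definition O_fun (Rp b1 b2 b3 q n : R) : R :=
  (1 - Rp) * n / (Rp * (1 - q))
  - (2 * (1 - Rp) ^ 2 * q * n / Rp)
    / (2 * (1 - Rp) * (1 - q) * ((1 - Rp) * q + Rp) - phi_fun Rp b1 b2 b3 q n
       - sgn (1 - Rp) * sqrt (phi_fun Rp b1 b2 b3 q n ^ 2 + E2_fun Rp b2 q)).

Definition in_S (Rp b1 b2 b3 q n : R) : Prop :=
  q = 1 \/ q = Rp / (Rp - 1) \/ n = 0 \/
  (q < 1 /\ (1 - Rp) * n >= (1 - Rp) * l_fun Rp b1 b2 b3 q).

Definition in_dom (q n : R) : Prop := 0 < q /\ 0 <= n.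

Definition F_raw (Rp b1 b2 b3 q n : R) : R := O_fun Rp b1 b2 b3 q n / n.

(* F extended by limits: on S, the limit of F_raw at (q,n) taken through points
   of the domain outside S, when such a limit exists (an arbitrary value,
   chosen by epsilon, otherwise). *)
Definition F_lim_at (Rp b1 b2 b3 q n l : R) : Prop :=
  filterlim (fun p : R * R => F_raw Rp b1 b2 b3 (fst p) (snd p))
    (within (fun p : R * R => in_dom (fst p) (snd p) /\ ~ in_S Rp b1 b2 b3 (fst p) (snd p))
       (locally (q, n)))
    (locally l).

Definition F_fun (Rp b1 b2 b3 q n : R) : R :=
  match excluded_middle_informative (in_S Rp b1 b2 b3 q n) with
  | left _ => epsilon (inhabits 0) (F_lim_at Rp b1 b2 b3 q n)
  | right _ => F_raw Rp b1 b2 b3 q n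
  end.

(* d is the partial derivative in n of f at (q,n), taken relative to the
   domain n' >= 0 (an ordinary derivative when n > 0, a right derivative at n = 0). *)
Definition is_partial_n (f : R -> R -> R) (q n d : R) : Prop :=
  filterlim (fun n' => (f q n' - f q n) / (n' - n))
    (within (fun n' => 0 <= n' /\ n' <> n) (locally n)) (locally d).

(* Main.v *)
Require Import Defs.
From Stdlib Require Import Reals Lra Psatz ClassicalEpsilon.
From Coquelicot Require Import Coquelicot.
Open Scope R_scope.

Section C.
Context {U : UniformSpace}.
Lemma c_plus (f g : U -> R) x : continuous f x -> continuous g x -> continuous (fun y => f y + g y) x.
Proof. intros; exact (continuous_plus f g x H H0). Qed.
Lemma c_mult (f g : U -> R) x : continuous f x -> continuous g x -> continuous (fun y => f y * g y) x.
Proof. intros; exact (continuous_mult f g x H H0). Qed.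
Lemma c_opp (f : U -> R) x : continuous f x -> continuous (fun y => - f y) x.
Proof. intros; exact (continuous_opp f x H). Qed.
Lemma c_minus (f g : U -> R) x : continuous f x -> continuous g x -> continuous (fun y => f y - g y) x.
Proof. intros; apply c_plus; auto; apply c_opp; auto. Qed.
Lemma c_const (c : R) x : continuous (fun _ : U => c) x.
Proof. apply continuous_const. Qed.
Lemma c_inv (f : U -> R) x : continuous f x -> f x <> 0 -> continuous (fun y => / f y) x.
Proof. intros. apply (continuous_comp f (fun z => / z)); auto. now apply continuous_Rinv. Qed.
Lemma c_div (f g : U -> R) x : continuous f x -> continuous g x -> g x <> 0 -> continuous (fun y => f y / g y) x.
Proof. intros. unfold Rdiv. apply c_mult; auto. apply c_inv; auto. Qed.
Lemma c_sqrt (f : U -> R) x : continuous f x -> continuous (fun y => sqrt (f y)) x.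
Proof. intros. apply (continuous_comp f sqrt); auto. apply continuous_sqrt. Qed.
Lemma c_pow (f : U -> R) x k : continuous f x -> continuous (fun y => f y ^ k) x.
Proof. intros. induction k; simpl. apply c_const. apply c_mult; auto. Qed.
Lemma c_nz (f : U -> R) x : continuous f x -> f x <> 0 -> locally x (fun y => f y <> 0).
Proof.
  intros Hc Hn. assert (Hp : 0 < Rabs (f x)) by (apply Rabs_pos_lt; auto).
  specialize (Hc (ball (f x) (mkposreal _ Hp))). 
  assert (H := Hc (locally_ball _ _)). unfold filtermap in H.
  revert H. apply filter_imp. intros y Hy Hy0. 
  change (Rabs (f y - f x) < Rabs (f x)) in Hy. rewrite Hy0 in Hy.
  rewrite Rminus_0_l, Rabs_Ropp in Hy. lra.
Qed.
End C.

Lemma c_fst (q n : R) : continuous (fun p : R * R => fst p) (q, n).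
Proof. apply continuous_fst. Qed.
Lemma c_snd (q n : R) : continuous (fun p : R * R => snd p) (q, n).
Proof. apply continuous_snd. Qed.


Definition SQ Rp b1 b2 b3 q n := sqrt (phi_fun Rp b1 b2 b3 q n ^ 2 + E2_fun Rp b2 q).
Definition Wf Rp b1 b2 b3 q n := phi_fun Rp b1 b2 b3 q n - sgn (1 - Rp) * SQ Rp b1 b2 b3 q n.
Definition Kc Rp b2 := 4 * Rp ^ 2 * (1 - Rp) ^ 2 * (b2 - 1).
Definition Pq Rp q := (1 - Rp) * q + Rp.
Definition uf Rp b1 b2 b3 q n := Kc Rp b2 / Wf Rp b1 b2 b3 q n.
Definition Tf Rp b1 b2 b3 q n := 2 * (1 - Rp) * Pq Rp q + (1 - q) * uf Rp b1 b2 b3 q n.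
Definition gfun Rp q u := (1 - Rp) * (2 * Rp * (1 - Rp) + u) / (Rp * (2 * (1 - Rp) * Pq Rp q + (1 - q) * u)).
Definition Gf Rp b1 b2 b3 q n := gfun Rp q (uf Rp b1 b2 b3 q n).

Ltac cpoly := repeat match goal with
 | |- continuous (fun p => fst p) _ => apply c_fst
 | |- continuous (fun p => snd p) _ => apply c_snd
 | |- continuous (fun p => @?f p + @?g p) _ => apply (c_plus f g)
 | |- continuous (fun p => @?f p - @?g p) _ => apply (c_minus f g)
 | |- continuous (fun p => @?f p * @?g p) _ => apply (c_mult f g)
 | |- continuous (fun p => - @?f p) _ => apply (c_opp f)
 | |- continuous (fun p => @?f p ^ ?k) _ => apply (c_pow f _ k)
 | |- continuous (fun p => ?c) _ => apply c_const
 end.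

Section S.
Variables Rp b1 b2 b3 q0 n0 : R.

Lemma cont_phi : continuous (fun p : R * R => phi_fun Rp b1 b2 b3 (fst p) (snd p)) (q0, n0).
Proof. unfold phi_fun. cpoly. Qed.
Lemma cont_E2 : continuous (fun p : R * R => E2_fun Rp b2 (fst p)) (q0, n0).
Proof. unfold E2_fun. cpoly. Qed.
Lemma cont_W : continuous (fun p : R * R => Wf Rp b1 b2 b3 (fst p) (snd p)) (q0, n0).
Proof. unfold Wf, SQ. apply c_minus. apply cont_phi. apply c_mult. apply c_const.
  apply c_sqrt. apply c_plus. apply c_pow. apply cont_phi. apply cont_E2. Qed.
Hypothesis HW : Wf Rp b1 b2 b3 q0 n0 <> 0.
Lemma cont_u : continuous (fun p : R * R => uf Rp b1 b2 b3 (fst p) (snd p)) (q0, n0).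
Proof. unfold uf. apply c_div. apply c_const. apply cont_W. exact HW. Qed.
Lemma cont_T : continuous (fun p : R * R => Tf Rp b1 b2 b3 (fst p) (snd p)) (q0, n0).
Proof. unfold Tf, Pq. apply c_plus. cpoly. apply c_mult. cpoly. apply cont_u. Qed.
Hypothesis HT : Tf Rp b1 b2 b3 q0 n0 <> 0.
Hypothesis HR : Rp <> 0.
Lemma cont_G : continuous (fun p : R * R => Gf Rp b1 b2 b3 (fst p) (snd p)) (q0, n0).
Proof. unfold Gf, gfun. apply c_div. apply c_mult. cpoly. apply c_plus. cpoly. apply cont_u.
  apply c_mult. cpoly. apply (cont_T). simpl. unfold Tf in HT. apply Rmult_integral_contrapositive. split; auto. Qed.
End S.


Lemma sgn_sq x : x <> 0 -> sgn x * sgn x = 1.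
Proof. intros. unfold sgn. destruct (Rlt_dec 0 x); [lra|]. destruct (Rlt_dec x 0); lra. Qed.

Lemma SQ_sq Rp b1 b2 b3 q n : 1 < b2 -> SQ Rp b1 b2 b3 q n * SQ Rp b1 b2 b3 q n = phi_fun Rp b1 b2 b3 q n ^ 2 + E2_fun Rp b2 q.
Proof. intros. unfold SQ. apply sqrt_sqrt. unfold E2_fun.
  assert (0 <= (1 - Rp) ^ 2 * (1-q)^2 * Rp ^ 2) by (apply Rmult_le_pos; [apply Rmult_le_pos|]; apply pow2_ge_0).
  nra. Qed.

Lemma D_eq Rp b1 b2 b3 q n : Rp <> 1 -> 1 < b2 -> Wf Rp b1 b2 b3 q n <> 0 ->
  2 * (1 - Rp) * (1 - q) * ((1 - Rp) * q + Rp) - phi_fun Rp b1 b2 b3 q n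
       - sgn (1 - Rp) * sqrt (phi_fun Rp b1 b2 b3 q n ^ 2 + E2_fun Rp b2 q)
  = (1 - q) * Tf Rp b1 b2 b3 q n.
Proof.
  intros HR Hb HW.
  assert (Hs := sgn_sq (1 - Rp) ltac:(lra)).
  assert (HS := SQ_sq Rp b1 b2 b3 q n Hb).
  fold (SQ Rp b1 b2 b3 q n).
  assert (Hk : - phi_fun Rp b1 b2 b3 q n - sgn (1 - Rp) * SQ Rp b1 b2 b3 q n = E2_fun Rp b2 q / Wf Rp b1 b2 b3 q n).
  { apply (Rmult_eq_reg_r (Wf Rp b1 b2 b3 q n)); auto. field_simplify; auto.
    unfold Wf. set (s := sgn (1 - Rp)) in *. set (S := SQ Rp b1 b2 b3 q n) in *.
    set (f := phi_fun Rp b1 b2 b3 q n) in *.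
    replace (f ^ 2) with (f * f) by ring.
    transitivity (- f * f + (s*s) * (S * S)); [ring|]. rewrite Hs, HS. ring. }
  unfold Tf, uf, Pq. 
  transitivity (2 * (1 - Rp) * (1 - q) * ((1 - Rp) * q + Rp) + (- phi_fun Rp b1 b2 b3 q n - sgn (1 - Rp) * SQ Rp b1 b2 b3 q n)); [ring|].
  rewrite Hk. unfold E2_fun, Kc. field. auto.
Qed.

Lemma raw_eq Rp b1 b2 b3 q n : 0 < Rp -> Rp <> 1 -> 1 < b2 -> q <> 1 -> n <> 0 ->
  Wf Rp b1 b2 b3 q n <> 0 -> Tf Rp b1 b2 b3 q n <> 0 ->
  F_raw Rp b1 b2 b3 q n = Gf Rp b1 b2 b3 q n.
Proof.
  intros HR HR1 Hb Hq Hn HW HT.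
  unfold F_raw, O_fun. rewrite D_eq; auto.
  unfold Gf, gfun. fold (uf Rp b1 b2 b3 q n).
  unfold Tf in *. unfold Pq in *. set (u := uf Rp b1 b2 b3 q n) in *.
  field. repeat split; try lra.
Qed.


Definition proper_pt Rp b1 b2 b3 q n := forall eps : R, 0 < eps ->
  exists q2 n2, Rabs (q2 - q) < eps /\ Rabs (n2 - n) < eps /\ in_dom q2 n2 /\ ~ in_S Rp b1 b2 b3 q2 n2.

Lemma F_eq_G Rp b1 b2 b3 q n : 0 < Rp -> Rp <> 1 -> 1 < b2 ->
  Wf Rp b1 b2 b3 q n <> 0 -> Tf Rp b1 b2 b3 q n <> 0 -> proper_pt Rp b1 b2 b3 q n ->
  F_fun Rp b1 b2 b3 q n = Gf Rp b1 b2 b3 q n.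
Proof.
  intros HR HR1 Hb HW HT Hp.
  unfold F_fun. destruct (excluded_middle_informative (in_S Rp b1 b2 b3 q n)) as [HS|HS].
  - assert (Hlim : F_lim_at Rp b1 b2 b3 q n (Gf Rp b1 b2 b3 q n)).
    { unfold F_lim_at.
      assert (Hloc : locally (q, n) (fun p : R * R => Wf Rp b1 b2 b3 (fst p) (snd p) <> 0 /\ Tf Rp b1 b2 b3 (fst p) (snd p) <> 0)).
      { apply filter_and.
        - apply (c_nz (fun p : R * R => Wf Rp b1 b2 b3 (fst p) (snd p))). apply cont_W. exact HW.
        - apply (c_nz (fun p : R * R => Tf Rp b1 b2 b3 (fst p) (snd p))). apply cont_T; auto. exact HT. }
      apply (filterlim_ext_loc (fun p : R * R => Gf Rp b1 b2 b3 (fst p) (snd p))).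
      - unfold within. revert Hloc. apply filter_imp. intros p [H1 H2] [Hd HnS].
        symmetry. apply raw_eq; auto.
        + intro E; apply HnS; left; auto.
        + intro E; apply HnS; right; right; left; auto.
      - apply (filterlim_filter_le_1 _ (filter_le_within (F := locally (q, n)) _)).
        change (Gf Rp b1 b2 b3 q n) with (Gf Rp b1 b2 b3 (fst (q, n)) (snd (q, n))).
        apply (cont_G Rp b1 b2 b3 q n); auto. lra. }
    assert (Hspec : F_lim_at Rp b1 b2 b3 q n (epsilon (inhabits 0) (F_lim_at Rp b1 b2 b3 q n))).
    { apply epsilon_spec. exists (Gf Rp b1 b2 b3 q n). exact Hlim. }
    assert (PF : ProperFilter' (within (fun p : R * R => in_dom (fst p) (snd p) /\ ~ in_S Rp b1 b2 b3 (fst p) (snd p)) (locally (q, n)))).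
    { constructor.
      - intros [eps Heps]. destruct (Hp eps (cond_pos eps)) as [q2 [n2 [H1 [H2 [H3 H4]]]]].
        apply (Heps (q2, n2)). split; assumption. split; assumption.
      - apply within_filter. apply locally_filter. }
    exact (filterlim_locally_unique (F := within _ _) _ _ _ Hspec Hlim).
  - apply raw_eq; auto.
    + intro E; apply HS; left; auto.
    + intro E; apply HS; right; right; left; auto.
Qed.


Section Der.
Variables Rp b1 b2 b3 q n : R.
Hypothesis HR : 0 < Rp.
Hypothesis HR1 : Rp <> 1.
Hypothesis Hb1 : 0 < b1.
Hypothesis Hb2 : 1 < b2.
Hypothesis Hq : 0 < q.
Hypothesis Hpos : 0 < phi_fun Rp b1 b2 b3 q n ^ 2 + E2_fun Rp b2 q.
Hypothesis HW : Wf Rp b1 b2 b3 q n <> 0.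
Hypothesis HT : Tf Rp b1 b2 b3 q n <> 0.

Let f := phi_fun Rp b1 b2 b3 q n.
Let S := SQ Rp b1 b2 b3 q n.
Let s := sgn (1 - Rp).

Lemma S_pos : 0 < S.
Proof. unfold S, SQ. apply sqrt_lt_R0. exact Hpos. Qed.

Lemma d_phi : is_derive (fun x => phi_fun Rp b1 b2 b3 q x) n b1.
Proof. unfold phi_fun. auto_derive; auto. ring. Qed.

Lemma d_SQ : is_derive (fun x => SQ Rp b1 b2 b3 q x) n (f * b1 / S).
Proof.
  assert (H1 : is_derive sqrt (f ^ 2 + E2_fun Rp b2 q) (/ (2 * sqrt (f ^ 2 + E2_fun Rp b2 q)))).
  { apply is_derive_Reals. apply derivable_pt_lim_sqrt. exact Hpos. }
  assert (H2 : is_derive (fun x => phi_fun Rp b1 b2 b3 q x ^ 2 + E2_fun Rp b2 q) n (2 * f * b1)).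
  { unfold f, phi_fun. auto_derive; auto. ring. }
  assert (H := is_derive_comp _ _ _ _ _ H1 H2). unfold SQ.
  assert (Sp := S_pos).
  assert (E : f * b1 / S = 2 * f * b1 * / (2 * S)) by (field; lra).
  rewrite E. exact H.
Qed.
Let dW := b1 - s * (f * b1 / S).
Let W := Wf Rp b1 b2 b3 q n.
Let u := uf Rp b1 b2 b3 q n.
Let T := Tf Rp b1 b2 b3 q n.

Lemma d_W : is_derive (fun x => Wf Rp b1 b2 b3 q x) n dW.
Proof.
  assert (H := is_derive_minus _ _ _ _ _ d_phi (is_derive_scal _ _ s _ d_SQ)).
  exact H.
Qed.

Lemma d_u : is_derive (fun x => uf Rp b1 b2 b3 q x) n (Kc Rp b2 * (- dW / W ^ 2)).
Proof.
  assert (H := is_derive_scal _ _ (Kc Rp b2) _ (is_derive_inv _ _ _ d_W HW)).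
  exact H.
Qed.

Let dg := 2 * (1 - Rp) ^ 2 * q / (Rp * T ^ 2).

Lemma d_g : is_derive (fun v => gfun Rp q v) u dg.
Proof.
  unfold gfun, dg, T, Tf. fold u. unfold Tf in HT. fold u in HT. unfold Pq in *.
  auto_derive.
  - apply Rmult_integral_contrapositive; split; lra.
  - field. split; lra.
Qed.

Lemma d_G : is_derive (fun x => Gf Rp b1 b2 b3 q x) n (Kc Rp b2 * (- dW / W ^ 2) * dg).
Proof.
  assert (H := is_derive_comp _ _ _ _ _ d_g d_u). exact H.
Qed.

Lemma d_G_nonpos : Kc Rp b2 * (- dW / W ^ 2) * dg <= 0.
Proof.
  assert (Sp := S_pos).
  assert (HS : S * S = f ^ 2 + E2_fun Rp b2 q) by (apply SQ_sq; auto).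
  assert (Hs : s = 1 \/ s = -1).
  { unfold s, sgn. destruct (Rlt_dec 0 (1 - Rp)); auto. destruct (Rlt_dec (1 - Rp) 0); auto. lra. }
  assert (HE : 0 <= E2_fun Rp b2 q).
  { unfold E2_fun. assert (0 <= (1 - Rp) ^ 2 * (1-q)^2 * Rp ^ 2) by (apply Rmult_le_pos; [apply Rmult_le_pos|]; apply pow2_ge_0). nra. }
  assert (HdW : 0 <= dW).
  { unfold dW. assert (s * f <= S).
    { assert (Rabs f <= S). { rewrite <- (Rabs_pos_eq S) by lra. apply Rsqr_le_abs_0. unfold Rsqr. nra. }
      destruct Hs as [-> | ->]; [assert (f <= Rabs f) by apply RRle_abs | assert (-f <= Rabs f) by apply Rabs_maj2]; lra. }
    replace (b1 - s * (f * b1 / S)) with (b1 * (S - s * f) / S) by (field; lra).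
    apply Rmult_le_pos; [|apply Rlt_le, Rinv_0_lt_compat; auto]. apply Rmult_le_pos; lra. }
  assert (HK : 0 <= Kc Rp b2).
  { unfold Kc. assert (0 <= Rp ^ 2 * (1 - Rp) ^ 2) by (apply Rmult_le_pos; apply pow2_ge_0). nra. }
  assert (HW2 : 0 < W ^ 2) by (apply pow2_gt_0; exact HW).
  assert (HT2 : 0 < T ^ 2) by (apply pow2_gt_0; exact HT).
  assert (Hdg : 0 <= dg).
  { unfold dg. apply Rmult_le_pos. assert (0 <= (1 - Rp) ^ 2) by apply pow2_ge_0. nra.
    apply Rlt_le, Rinv_0_lt_compat. nra. }
  assert (0 <= dW / W ^ 2) by (apply Rmult_le_pos; [lra| apply Rlt_le, Rinv_0_lt_compat; lra]).
  assert (Eq : - dW / W ^ 2 = - (dW / W ^ 2)) by (unfold Rdiv; ring).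
  rewrite Eq. 
  assert (0 <= Kc Rp b2 * (dW / W ^ 2) * dg) by (apply Rmult_le_pos; [apply Rmult_le_pos|]; assumption).
  assert (Eq2 : Kc Rp b2 * - (dW / W ^ 2) * dg = - (Kc Rp b2 * (dW / W ^ 2) * dg)) by ring.
  rewrite Eq2. lra.
Qed.
End Der.


Definition region Rp b1 b2 b3 q n :=
  (0 < q <= 1 /\
    (1 - Rp) * m_fun Rp b1 b3 q < (1 - Rp) * n /\
    (1 - Rp) * n < (1 - Rp) * l_fun Rp b1 b2 b3 q)
   \/
   (1 < q /\ (1 - Rp) * m_fun Rp b1 b3 q < (1 - Rp) * n).

Lemma l_ident Rp b1 b2 b3 q n : 0 < b1 -> Rp <> 1 -> q <> 1 -> (1 - Rp) * q + Rp <> 0 ->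
  let A := 2 * (1 - Rp) * (1 - q) * ((1 - Rp) * q + Rp) in
  b1 * (n - l_fun Rp b1 b2 b3 q) * (2 * A) = phi_fun Rp b1 b2 b3 q n * (2 * A) - (A * A - E2_fun Rp b2 q).
Proof.
  intros. unfold A, l_fun, m_fun, phi_fun, E2_fun. field. repeat split; try lra.
Qed.

Lemma sgn_cases x : x <> 0 -> (0 < x /\ sgn x = 1) \/ (x < 0 /\ sgn x = -1).
Proof. intros. unfold sgn. destruct (Rlt_dec 0 x); [left; lra|]. destruct (Rlt_dec x 0); [right; lra| lra]. Qed.

Section G.
Variables Rp b1 b2 b3 q n : R.
Hypothesis HR : 0 < Rp.
Hypothesis HR1 : Rp <> 1.
Hypothesis Hb1 : 0 < b1.
Hypothesis Hb2 : 1 < b2.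
Hypothesis Hreg : region Rp b1 b2 b3 q n.

Lemma good_q1 : q = 1 ->
  0 < phi_fun Rp b1 b2 b3 q n ^ 2 + E2_fun Rp b2 q /\ Wf Rp b1 b2 b3 q n <> 0 /\ Tf Rp b1 b2 b3 q n <> 0.
Proof.
  intros ->.
  assert (HE : E2_fun Rp b2 1 = 0) by (unfold E2_fun; ring).
  assert (Hl : (1 - Rp) * n < (1 - Rp) * l_fun Rp b1 b2 b3 1) by (destruct Hreg as [[_ [_ H]] | [H _]]; lra).
  assert (Hphi : phi_fun Rp b1 b2 b3 1 n = b1 * (n - l_fun Rp b1 b2 b3 1)).
  { unfold phi_fun, l_fun, m_fun. field. lra. }
  assert (Hsq : SQ Rp b1 b2 b3 1 n = Rabs (phi_fun Rp b1 b2 b3 1 n)).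
  { unfold SQ. rewrite HE, Rplus_0_r. rewrite <- sqrt_Rsqr_abs. unfold Rsqr. f_equal. ring. }
  destruct (sgn_cases (1 - Rp)) as [[H1 H2] | [H1 H2]]; [lra | |].
  - assert (Hn : n < l_fun Rp b1 b2 b3 1) by nra.
    assert (Hp : phi_fun Rp b1 b2 b3 1 n < 0) by (rewrite Hphi; nra).
    split; [rewrite HE; nra|]. split.
    + unfold Wf. rewrite Hsq, H2, Rabs_left by lra. lra.
    + unfold Tf, Pq. rewrite Rminus_diag, Rmult_0_l, Rplus_0_r. nra.
  - assert (Hn : n > l_fun Rp b1 b2 b3 1) by nra.
    assert (Hp : phi_fun Rp b1 b2 b3 1 n > 0) by (rewrite Hphi; nra).
    split; [rewrite HE; nra|]. split.
    + unfold Wf. rewrite Hsq, H2, Rabs_right by lra. lra.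
    + unfold Tf, Pq. rewrite Rminus_diag, Rmult_0_l, Rplus_0_r. nra.
Qed.
Lemma good_qn1 : q <> 1 ->
  0 < phi_fun Rp b1 b2 b3 q n ^ 2 + E2_fun Rp b2 q /\ Wf Rp b1 b2 b3 q n <> 0 /\ Tf Rp b1 b2 b3 q n <> 0.
Proof.
  intros Hq1.
  assert (Hq0 : 0 < q) by (destruct Hreg as [[H _] | [H _]]; lra).
  set (f := phi_fun Rp b1 b2 b3 q n).
  set (E := E2_fun Rp b2 q).
  assert (HE : 0 < E).
  { unfold E, E2_fun. assert (0 < (1 - Rp) ^ 2) by (apply pow2_gt_0; lra).
    assert (0 < (1 - q) ^ 2) by (apply pow2_gt_0; lra).
    assert (0 < Rp ^ 2) by (apply pow2_gt_0; lra).
    assert (0 < Rp ^ 2 * (1 - Rp) ^ 2 * (1 - q) ^ 2) by (apply Rmult_lt_0_compat; [apply Rmult_lt_0_compat|]; lra).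
    nra. }
  assert (Hpos : 0 < f ^ 2 + E) by (assert (0 <= f ^ 2) by apply pow2_ge_0; lra).
  set (S := SQ Rp b1 b2 b3 q n).
  assert (HS : S * S = f ^ 2 + E) by (apply SQ_sq; auto).
  assert (HS0 : 0 < S) by (unfold S, SQ; apply sqrt_lt_R0; exact Hpos).
  assert (HW : Wf Rp b1 b2 b3 q n <> 0).
  { unfold Wf. fold f S. intro Hw.
    destruct (sgn_cases (1 - Rp)) as [[_ H2] | [_ H2]]; [lra | |]; rewrite H2 in Hw.
    - assert (HSf : S = f) by lra. rewrite HSf in HS. nra.
    - assert (HSf : S = - f) by lra. rewrite HSf in HS. nra. }
  split; [exact Hpos|]. split; [exact HW|].
  intro HT.
  assert (HD := D_eq Rp b1 b2 b3 q n HR1 Hb2 HW). rewrite HT, Rmult_0_r in HD.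
  fold f E in HD. change (sqrt (f ^ 2 + E)) with S in HD.
  set (A := 2 * (1 - Rp) * (1 - q) * ((1 - Rp) * q + Rp)) in HD.
  assert (Hsq : A * A - 2 * A * f = E).
  { destruct (sgn_cases (1 - Rp)) as [[_ H2] | [_ H2]]; [lra | |]; rewrite H2 in HD. 
    - assert (HSf : S = A - f) by lra. rewrite HSf in HS. ring_simplify in HS. lra.
    - assert (HSf : S = f - A) by lra. rewrite HSf in HS. ring_simplify in HS. lra. }
  assert (HA : A <> 0) by (intro HA; rewrite HA in Hsq; lra).
  assert (HP : (1 - Rp) * q + Rp <> 0) by (intro HP; apply HA; unfold A; rewrite HP; ring).
  assert (Hn : n = l_fun Rp b1 b2 b3 q).
  { assert (Hi := l_ident Rp b1 b2 b3 q n Hb1 HR1 Hq1 HP). simpl in Hi. fold A f E in Hi.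
    assert (b1 * (n - l_fun Rp b1 b2 b3 q) * (2 * A) = 0) by (rewrite Hi; lra).
    apply Rmult_integral in H. destruct H as [H|H]; [|lra].
    apply Rmult_integral in H. destruct H as [H|H]; lra. }
  destruct Hreg as [[Hq [Hm Hl]] | [Hq Hm]].
  - rewrite <- Hn in Hl. lra.
  - destruct (sgn_cases (1 - Rp)) as [[H1 H2] | [H1 H2]]; [lra | |]; rewrite H2 in HD.
    +
      assert (HAn : A < 0).
      { unfold A. assert (0 < (1 - Rp) * q + Rp) by nra.
        assert (0 < (1 - Rp) * (q - 1)) by nra.
        assert (0 < (1 - Rp) * (q - 1) * ((1 - Rp) * q + Rp)) by nra. nra. }
      assert (Hf : - f <= S) by nra. lra.
    + assert (Hf : f <= S) by nra.
      assert (HAn : A < 0) by lra.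
      assert (HPn : (1 - Rp) * q + Rp < 0).
      { unfold A in HAn. assert (0 < (1 - Rp) * (1 - q)) by nra. nra. }
      assert (Hlm : m_fun Rp b1 b3 q < l_fun Rp b1 b2 b3 q).
      { unfold l_fun.
        assert (0 < (1 - Rp) / b1 * q * (1 - q)).
        { unfold Rdiv. assert (0 < / b1) by (apply Rinv_0_lt_compat; lra).
          assert (0 < (1 - Rp) * (1 - q)) by nra.
          replace ((1 - Rp) * / b1 * q * (1 - q)) with (((1 - Rp) * (1 - q)) * (/ b1 * q)) by ring.
          apply Rmult_lt_0_compat; [lra| apply Rmult_lt_0_compat; lra]. }
        assert (0 < (b2 - 1) * Rp * (1 - Rp) / b1 * (q / ((1 - Rp) * q + Rp))).
        { unfold Rdiv. assert (0 < / b1) by (apply Rinv_0_lt_compat; lra).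
          assert (/ ((1 - Rp) * q + Rp) < 0) by (apply Rinv_lt_0_compat; lra).
          assert (0 < (b2 - 1) * Rp) by nra.
          assert ((b2 - 1) * Rp * (1 - Rp) < 0) by nra.
          assert ((b2 - 1) * Rp * (1 - Rp) * / b1 < 0) by nra.
          assert (q * / ((1 - Rp) * q + Rp) < 0) by nra.
          replace ((b2 - 1) * Rp * (1 - Rp) * / b1 * (q * / ((1 - Rp) * q + Rp))) with
            (- ((b2 - 1) * Rp * (1 - Rp) * / b1) * - (q * / ((1 - Rp) * q + Rp))) by ring.
          apply Rmult_lt_0_compat; lra. }
        lra. }
      rewrite <- Hn in Hlm. nra.
Qed.
End G.


Lemma partial_from_derive (FF : R -> R -> R) g q n d δ : 0 < δ ->
  (forall n', 0 <= n' -> Rabs (n' - n) < δ -> FF q n' = g n') -> 0 <= n ->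
  is_derive g n d -> is_partial_n FF q n d.
Proof.
  intros Hδ Heq Hn Hd. unfold is_partial_n.
  intros P [eps HP]. apply is_derive_Reals in Hd.
  destruct (Hd eps (cond_pos eps)) as [δ1 H1].
  unfold filtermap, within.
  assert (Hm : 0 < Rmin δ δ1) by (apply Rmin_pos; [lra | apply cond_pos]).
  exists (mkposreal _ Hm). intros y Hy [Hy0 Hyn]. change R in y. apply HP.
  change (Rabs (y - n) < Rmin δ δ1) in Hy.
  assert (Hy1 : Rabs (y - n) < δ) by (eapply Rlt_le_trans; [exact Hy| apply Rmin_l]).
  assert (Hy2 : Rabs (y - n) < δ1) by (eapply Rlt_le_trans; [exact Hy| apply Rmin_r]).
  rewrite (Heq y Hy0 Hy1), (Heq n Hn) by (rewrite Rminus_diag, Rabs_R0; lra).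
  change (Rabs ((g y - g n) / (y - n) - d) < eps).
  assert (Hh : y - n <> 0) by lra.
  specialize (H1 (y - n) Hh Hy2). replace (n + (y - n)) with y in H1 by ring. exact H1.
Qed.

Lemma region_open Rp b1 b2 b3 q n : Rp <> 1 -> region Rp b1 b2 b3 q n ->
  exists δ, 0 < δ /\ forall n', Rabs (n' - n) < δ -> region Rp b1 b2 b3 q n'.
Proof.
  intros HR1 Hr.
  assert (Ha : 0 < Rabs (1 - Rp)) by (apply Rabs_pos_lt; lra).
  assert (Hbound : forall c n', Rabs (n' - n) < c / Rabs (1 - Rp) -> Rabs ((1 - Rp) * n' - (1 - Rp) * n) < c).
  { intros c n' H. replace ((1 - Rp) * n' - (1 - Rp) * n) with ((1 - Rp) * (n' - n)) by ring.
    rewrite Rabs_mult. apply (Rmult_lt_compat_l (Rabs (1 - Rp))) in H; auto.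
    replace (Rabs (1 - Rp) * (c / Rabs (1 - Rp))) with c in H by (field; lra). exact H. }
  destruct Hr as [[Hq [Hm Hl]] | [Hq Hm]].
  - set (c := Rmin ((1 - Rp) * n - (1 - Rp) * m_fun Rp b1 b3 q) ((1 - Rp) * l_fun Rp b1 b2 b3 q - (1 - Rp) * n)).
    assert (Hc : 0 < c) by (apply Rmin_pos; lra).
    exists (c / Rabs (1 - Rp)). split. apply Rdiv_lt_0_compat; lra.
    intros n' Hn'. apply Hbound in Hn'. apply Rabs_def2 in Hn'.
    assert (c <= (1 - Rp) * n - (1 - Rp) * m_fun Rp b1 b3 q) by apply Rmin_l.
    assert (c <= (1 - Rp) * l_fun Rp b1 b2 b3 q - (1 - Rp) * n) by apply Rmin_r.
    left. lra.
  - set (c := (1 - Rp) * n - (1 - Rp) * m_fun Rp b1 b3 q).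
    assert (Hc : 0 < c) by (unfold c; lra).
    exists (c / Rabs (1 - Rp)). split. apply Rdiv_lt_0_compat; lra.
    intros n' Hn'. apply Hbound in Hn'. apply Rabs_def2 in Hn'.
    right. unfold c in Hn'. lra.
Qed.

Lemma region_q Rp b1 b2 b3 q n : region Rp b1 b2 b3 q n -> 0 < q.
Proof. intros [[H _]|[H _]]; lra. Qed.

Lemma proper_region Rp b1 b2 b3 q n : 0 < Rp -> Rp <> 1 -> region Rp b1 b2 b3 q n -> 0 <= n ->
  proper_pt Rp b1 b2 b3 q n.
Proof.
  intros HR HR1 Hr Hn eps Heps.
  assert (Hq0 := region_q _ _ _ _ _ _ Hr).
  destruct (classic (q = 1 \/ q = Rp / (Rp - 1))) as [Hsp | Hnsp].
  - assert (Hq1 : 1 <= q).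
    { destruct Hsp as [->|Hsp]; [lra|].
      assert (Hx : q * (Rp - 1) = Rp) by (rewrite Hsp; field; lra).
      assert (Rp - 1 > 0) by nra. nra. }
    assert (Ht : exists t, 0 < t < eps /\ q + t <> Rp / (Rp - 1)).
    { destruct (Req_dec (q + eps / 2) (Rp / (Rp - 1))).
      - exists (eps / 4). split; [lra|]. lra.
      - exists (eps / 2). split; [lra|]. auto. }
    destruct Ht as [t [Ht1 Ht2]].
    exists (q + t), (n + t). split; [replace (q + t - q) with t by ring; rewrite Rabs_right; lra|].
    split; [replace (n + t - n) with t by ring; rewrite Rabs_right; lra|].
    split; [unfold in_dom; lra|].
    unfold in_S. intros [H|[H|[H|[H _]]]]; lra.
  - destruct (region_open _ _ _ _ _ _ HR1 Hr) as [δ [Hδ Hr']].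
    set (t := Rmin eps δ / 2).
    assert (Hm : 0 < Rmin eps δ) by (apply Rmin_pos; lra).
    assert (Hm1 := Rmin_l eps δ). assert (Hm2 := Rmin_r eps δ).
    exists q, (n + t). split; [rewrite Rminus_diag, Rabs_R0; lra|].
    assert (Htn : Rabs (n + t - n) = t) by (replace (n + t - n) with t by ring; rewrite Rabs_right; unfold t; lra).
    split; [rewrite Htn; unfold t; lra|].
    split; [unfold in_dom; unfold t; lra|].
    assert (Hrt : region Rp b1 b2 b3 q (n + t)) by (apply Hr'; rewrite Htn; unfold t; lra).
    unfold in_S. intros [H|[H|[H|[H1 H2]]]]; [tauto|tauto|unfold t in H; lra|].
    destruct Hrt as [[_ [_ Hl]]|[Hq _]]; lra.
Qed.


Theorem lemmaE3 (Rp b1 b2 b3 : R) :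
  0 < Rp -> Rp <> 1 -> 0 < b1 -> 1 < b2 -> 0 < b3 ->
  forall q n : R, 0 <= n ->
  ((0 < q <= 1 /\
    (1 - Rp) * m_fun Rp b1 b3 q < (1 - Rp) * n /\
    (1 - Rp) * n < (1 - Rp) * l_fun Rp b1 b2 b3 q)
   \/
   (1 < q /\ (1 - Rp) * m_fun Rp b1 b3 q < (1 - Rp) * n)) ->
  exists d : R, is_partial_n (F_fun Rp b1 b2 b3) q n d /\ d <= 0.
Proof.
  intros HR HR1 Hb1 Hb2 Hb3 q n Hn Hreg0.
  assert (Hreg : region Rp b1 b2 b3 q n) by exact Hreg0.
  assert (Hgood : forall n', region Rp b1 b2 b3 q n' ->
    0 < phi_fun Rp b1 b2 b3 q n' ^ 2 + E2_fun Rp b2 q /\ Wf Rp b1 b2 b3 q n' <> 0 /\ Tf Rp b1 b2 b3 q n' <> 0).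
  { intros n' Hr. destruct (Req_dec q 1). apply good_q1; auto. apply good_qn1; auto. }
  destruct (region_open _ _ _ _ _ _ HR1 Hreg) as [δ [Hδ Hr']].
  assert (HFG : forall n', 0 <= n' -> Rabs (n' - n) < δ -> F_fun Rp b1 b2 b3 q n' = Gf Rp b1 b2 b3 q n').
  { intros n' Hn' Hd. assert (Hr := Hr' n' Hd). destruct (Hgood n' Hr) as [_ [HW HT]].
    apply F_eq_G; auto. apply proper_region; auto. }
  destruct (Hgood n Hreg) as [Hpos [HW HT]].
  assert (Hq := region_q _ _ _ _ _ _ Hreg).
  eexists. split.
  - eapply partial_from_derive; [exact Hδ | exact HFG | exact Hn |].
    apply d_G; auto.
  - apply d_G_nonpos; auto.
Qed.
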